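(* Let $W$ be a central type and let $t$ be a closed expression with $\vdash t:W$ derived in the ordered fragment $\mathcal{O}$ (i.e. without the rule (struct)). For every value $v$ with $\vdash v:W$ and all lists of resources $l,l'$, if $\langle t\mid\star\mid l\rangle^+\rightsquigarrow^*\langle v\mid\star\mid l'\rangle^{\varepsilon}$ for some polarity $\varepsilon$, then $l'=l$.
   Context: Polarities are $\varepsilon\in\{+,-\}$. Types: positive $P,Q ::= R \mid 1 \mid A\otimes B \mid A\oplus B$; negative $N,M ::= A\multimap B \mid A\,\&\,B$; $\varpi(P)=+$, $\varpi(N)=-$ ($R$ is an atomic type of resources). Central types are $W ::= 1\mid W\otimes W'\mid W\oplus W'$. Fix variables and resource constants $r_n$ ($n\in\mathbb N$). Expressions $t,u$ and values $v,w$: $t,u ::= v \mid (\mathrm{let}\ x^+=t\ \mathrm{in}\ u)^+ \mid (\mathrm{let}\ x^-=v\ \mathrm{in}\ u)^+ \mid \delta(v,(x,y).t)^+ \mid \delta(v,().t)^+ \mid \delta(v,x.t,y.u)^+ \mid (v\,w)^+ \mid (\pi_1 v)^+ \mid (\pi_2 v)^+$; $v,w ::= (\mathrm{let}\ x^+=t\ \mathrm{in}\ v)^- \mid (\mathrm{let}\ x^-=v\ \mathrm{in}\ w)^- \mid \delta(v,(x,y).w)^- \mid \delta(v,().w)^- \mid \delta(v,x.w,y.w')^- \mid (v\,w)^- \mid (\pi_1 v)^- \mid (\pi_2 v)^- \mid x \mid \mathrm{new} \mid \mathrm{delete} \mid (v,w) \mid () \mid \iota_1 v \mid \iota_2 v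 \mid \lambda x.t \mid \langle t,u\rangle \mid r_n$. $t[v/x]$ is capture-avoiding substitution. Contexts are finite lists of typed variables. Typing rules of $\mathcal{L}$ ($v,w$ range over values): (var) $x:A\vdash x:A$. (struct) from $\Gamma\vdash t:A$ and a type-preserving bijection $\sigma$ from entries of $\Gamma$ to entries of $\Gamma'$ (permutation plus renaming) derive $\Gamma'\vdash t[\sigma]:A$. $\vdash\mathrm{new}:1\multimap(R\oplus 1)$; $\vdash\mathrm{delete}:R\multimap 1$. (let) from $\Delta\vdash t:A$, $\Gamma,x:A\vdash u:B$ derive $\Gamma,\Delta\vdash(\mathrm{let}\ x^{\varpi(A)}=t\ \mathrm{in}\ u)^{\varpi(B)}:B$. From $\Gamma\vdash v:A$, $\Delta\vdash w:B$ derive $\Gamma,\Delta\vdash(v,w):A\otimes B$; from $\Delta\vdash v:A\otimes B$, $\Gamma,x:A,y:B,\Gamma'\vdash t:C$ derive $\Gamma,\Delta,\Gamma'\vdash\delta(v,(x,y).t)^{\varpi(C)}:C$. $\vdash():1$; from $\Delta\vdash v:1$, $\Gamma,\Gamma'\vdash t:A$ derive $\Gamma,\Delta,\Gamma'\vdash\delta(v,().t)^{\varpi(A)}:A$. From $\Gamma\vdash v:A$ derive $\Gamma\vdash\iota_1v:A\oplus B$; from $\Gamma\vdash v:B$ derive $\Gamma\vdash\iota_2v:A\oplus B$; from $\Delta\vdash v:A\oplus B$, $\Gamma,x:A,\Gamma'\vdash t:C$, $\Gamma,y:B,\Gamma'\vdash u:C$ derive $\Gamma,\Delta,\Gamma'\vdash\delta(v,x.t,y.u)^{\varpi(C)}:C$.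 From $x:A,\Gamma\vdash t:B$ derive $\Gamma\vdash\lambda x.t:A\multimap B$; from $\Gamma\vdash w:A$, $\Delta\vdash v:A\multimap B$ derive $\Gamma,\Delta\vdash(v\,w)^{\varpi(B)}:B$. From $\Gamma\vdash t:A$, $\Gamma\vdash u:B$ derive $\Gamma\vdash\langle t,u\rangle:A\&B$; from $\Gamma\vdash v:A_1\&A_2$ derive $\Gamma\vdash(\pi_iv)^{\varpi(A_i)}:A_i$. The ordered fragment $\mathcal{O}$ consists of derivations not using (struct). Machine: stacks $s ::= \star \mid v^\varepsilon\cdot s \mid \pi_i^\varepsilon\cdot s \mid (x^+.u)^\varepsilon\cdot s$; lists of resources $l ::= []\mid r_n::l$ (the freelist); commands $\langle t\mid s\mid l\rangle^\varepsilon$; $\rightsquigarrow^*$ is the reflexive-transitive closure of the one-step reduction $\rightsquigarrow$ given by ($i\in\{1,2\}$): $\langle(\mathrm{let}\ x^-=v\ \mathrm{in}\ t)^\varepsilon\mid s\mid l\rangle^\varepsilon\rightsquigarrow\langle t[v/x]\mid s\mid l\rangle^\varepsilon$; $\langle(\mathrm{let}\ x^+=t\ \mathrm{in}\ u)^\varepsilon\mid s\mid l\rangle^\varepsilon\rightsquigarrow\langle t\mid (x^+.u)^\varepsilon\cdot s\mid l\rangle^+$; $\langle v\mid (x^+.t)^\varepsilon\cdot s\mid l\rangle^+\rightsquigarrow\langle t[v/x]\mid s\mid l\rangle^\varepsilon$; $\langle (v\,w)^\varepsilon\mid s\mid l\rangle^\varepsilon\rightsquigarrow\langle v\mid w^\varepsilon\cdot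 s\mid l\rangle^-$; $\langle \lambda x.t\mid v^\varepsilon\cdot s\mid l\rangle^-\rightsquigarrow\langle t[v/x]\mid s\mid l\rangle^\varepsilon$; $\langle (\pi_i v)^\varepsilon\mid s\mid l\rangle^\varepsilon\rightsquigarrow\langle v\mid \pi_i^\varepsilon\cdot s\mid l\rangle^-$; $\langle \langle t_1,t_2\rangle\mid \pi_i^\varepsilon\cdot s\mid l\rangle^-\rightsquigarrow\langle t_i\mid s\mid l\rangle^\varepsilon$; $\langle \delta((v,w),(x,y).t)^\varepsilon\mid s\mid l\rangle^\varepsilon\rightsquigarrow\langle t[v/x,w/y]\mid s\mid l\rangle^\varepsilon$; $\langle \delta((),().t)^\varepsilon\mid s\mid l\rangle^\varepsilon\rightsquigarrow\langle t\mid s\mid l\rangle^\varepsilon$; $\langle \delta(\iota_i v,x_1.t_1,x_2.t_2)^\varepsilon\mid s\mid l\rangle^\varepsilon\rightsquigarrow\langle t_i[v/x_i]\mid s\mid l\rangle^\varepsilon$; $\langle \mathrm{new}\mid ()^{\varepsilon}\cdot s\mid r_n::l\rangle^-\rightsquigarrow\langle \iota_1 r_n\mid s\mid l\rangle^+$; $\langle \mathrm{new}\mid ()^{\varepsilon}\cdot s\mid []\rangle^-\rightsquigarrow\langle \iota_2 ()\mid s\mid []\rangle^+$; $\langle \mathrm{delete}\mid r_n^{\varepsilon}\cdot s\mid l\rangle^-\rightsquigarrow\langle ()\mid s\mid r_n::l\rangle^+$. *)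

(* Defs.v *)
(* Locally nameless representation of the calculus L:
   bound variables are de Bruijn indices (BVar), free variables are
   names (FVar : nat).  Terms are thus identified up to alpha-conversion
   and substitution t[v/x] of a bound variable is "opening". *)
From Stdlib Require Import List Arith Permutation.
Import ListNotations.

Inductive pol : Type := PPos | PNeg.

Inductive ty : Type :=
| TR : ty
| TOne : ty
| TTensor : ty -> ty -> ty
| TPlus : ty -> ty -> ty
| TLolli : ty -> ty -> ty
| TWith : ty -> ty -> ty.

Definition polarity (A : ty) : pol :=
  match A with
  | TLolli _ _ | TWith _ _ => PNeg
  | _ => PPos
  end.

Inductive central : ty -> Prop :=
| central_one : central TOne
| central_tensor W W' : central W -> central W' -> central (TTensor W W')
| central_plus W W' : central W -> central W' -> central (TPlus W W').

Inductive idx : Type := I1 | I2.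

(* Raw terms (the grammar classes "expression" / "value" are the
   predicates is_exp / is_val below).
   - Let p t u q      = (let x^p = t in u)^q        (x bound, index 0, in u)
   - DPair q v t      = delta(v,(x,y).t)^q          (in t: x = BVar 1, y = BVar 0)
   - DUnit q v t      = delta(v,().t)^q
   - DCase q v t u    = delta(v, x.t, y.u)^q        (index 0 in t resp. u)
   - App q v w        = (v w)^q
   - Proj q i v       = (pi_i v)^q
   - Lam t            = lambda x. t                 (index 0 in t)
   - Withp t u        = < t , u >
   - Res n            = resource constant r_n *)
Inductive term : Type :=
| BVar : nat -> term
| FVar : nat -> term
| Let : pol -> term -> term -> pol -> term
| DPair : pol -> term -> term -> term
| DUnit : pol -> term -> term -> term
| DCase : pol -> term -> term -> term -> term
| App : pol -> term -> term -> term
| Proj : pol -> idx -> term -> term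
| New : term
| Delete : term
| Pair : term -> term -> term
| Unit : term
| Inj : idx -> term -> term
| Lam : term -> term
| Withp : term -> term -> term
| Res : nat -> term.

Inductive is_val : term -> Prop :=
| val_let_pos t v : is_exp t -> is_val v -> is_val (Let PPos t v PNeg)
| val_let_neg v w : is_val v -> is_val w -> is_val (Let PNeg v w PNeg)
| val_dpair v w : is_val v -> is_val w -> is_val (DPair PNeg v w)
| val_dunit v w : is_val v -> is_val w -> is_val (DUnit PNeg v w)
| val_dcase v w w' : is_val v -> is_val w -> is_val w' -> is_val (DCase PNeg v w w')
| val_app v w : is_val v -> is_val w -> is_val (App PNeg v w)
| val_proj i v : is_val v -> is_val (Proj PNeg i v)
| val_bvar n : is_val (BVar n)
| val_fvar x : is_val (FVar x)
| val_new : is_val New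
| val_delete : is_val Delete
| val_pair v w : is_val v -> is_val w -> is_val (Pair v w)
| val_unit : is_val Unit
| val_inj i v : is_val v -> is_val (Inj i v)
| val_lam t : is_exp t -> is_val (Lam t)
| val_withp t u : is_exp t -> is_exp u -> is_val (Withp t u)
| val_res n : is_val (Res n)
with is_exp : term -> Prop :=
| exp_val v : is_val v -> is_exp v
| exp_let_pos t u : is_exp t -> is_exp u -> is_exp (Let PPos t u PPos)
| exp_let_neg v u : is_val v -> is_exp u -> is_exp (Let PNeg v u PPos)
| exp_dpair v t : is_val v -> is_exp t -> is_exp (DPair PPos v t)
| exp_dunit v t : is_val v -> is_exp t -> is_exp (DUnit PPos v t)
| exp_dcase v t u : is_val v -> is_exp t -> is_exp u -> is_exp (DCase PPos v t u)
| exp_app v w : is_val v -> is_val w -> is_exp (App PPos v w)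
| exp_proj i v : is_val v -> is_exp (Proj PPos i v).

Fixpoint open_rec (k : nat) (u : term) (t : term) : term :=
  match t with
  | BVar i => if Nat.eqb i k then u else BVar i
  | FVar x => FVar x
  | Let p t1 t2 q => Let p (open_rec k u t1) (open_rec (S k) u t2) q
  | DPair q v t1 => DPair q (open_rec k u v) (open_rec (S (S k)) u t1)
  | DUnit q v t1 => DUnit q (open_rec k u v) (open_rec k u t1)
  | DCase q v t1 t2 => DCase q (open_rec k u v) (open_rec (S k) u t1) (open_rec (S k) u t2)
  | App q v w => App q (open_rec k u v) (open_rec k u w)
  | Proj q i v => Proj q i (open_rec k u v)
  | New => New
  | Delete => Delete
  | Pair v w => Pair (open_rec k u v) (open_rec k u w)
  | Unit => Unit
  | Inj i v => Inj i (open_rec k u v)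
  | Lam t1 => Lam (open_rec (S k) u t1)
  | Withp t1 t2 => Withp (open_rec k u t1) (open_rec k u t2)
  | Res n => Res n
  end.

Definition open1 (v t : term) : term := open_rec 0 v t.
Definition open2 (v w t : term) : term := open_rec 0 w (open_rec 1 v t).

Fixpoint fv (t : term) : list nat :=
  match t with
  | BVar _ => []
  | FVar x => [x]
  | Let _ t1 t2 _ => fv t1 ++ fv t2
  | DPair _ v t1 => fv v ++ fv t1
  | DUnit _ v t1 => fv v ++ fv t1
  | DCase _ v t1 t2 => fv v ++ fv t1 ++ fv t2
  | App _ v w => fv v ++ fv w
  | Proj _ _ v => fv v
  | New | Delete | Unit | Res _ => []
  | Pair v w => fv v ++ fv w
  | Inj _ v => fv v
  | Lam t1 => fv t1
  | Withp t1 t2 => fv t1 ++ fv t2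
  end.

Fixpoint rename (f : nat -> nat) (t : term) : term :=
  match t with
  | BVar i => BVar i
  | FVar x => FVar (f x)
  | Let p t1 t2 q => Let p (rename f t1) (rename f t2) q
  | DPair q v t1 => DPair q (rename f v) (rename f t1)
  | DUnit q v t1 => DUnit q (rename f v) (rename f t1)
  | DCase q v t1 t2 => DCase q (rename f v) (rename f t1) (rename f t2)
  | App q v w => App q (rename f v) (rename f w)
  | Proj q i v => Proj q i (rename f v)
  | New => New
  | Delete => Delete
  | Pair v w => Pair (rename f v) (rename f w)
  | Unit => Unit
  | Inj i v => Inj i (rename f v)
  | Lam t1 => Lam (rename f t1)
  | Withp t1 t2 => Withp (rename f t1) (rename f t2)
  | Res n => Res n
  end.

Definition ctx := list (nat * ty).
Definition ok (G : ctx) : Prop := NoDup (map fst G).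

Definition pick {X : Type} (i : idx) (a b : X) : X :=
  match i with I1 => a | I2 => b end.

(* typed s G t A :  G |- t : A.
   s = true : the full system L (rule (struct) allowed);
   s = false : the ordered fragment O (no (struct)). *)
Inductive typed (s : bool) : ctx -> term -> ty -> Prop :=
| ty_var x A : typed s [(x, A)] (FVar x) A
| ty_struct G G' t A (f : nat -> nat) :
    s = true ->
    typed s G t A ->
    ok G' ->
    Permutation (map (fun e => (f (fst e), snd e)) G) G' ->
    typed s G' (rename f t) A
| ty_new : typed s [] New (TLolli TOne (TPlus TR TOne))
| ty_delete : typed s [] Delete (TLolli TR TOne)
| ty_let G D t u x A B :
    typed s D t A ->
    ~ In x (fv u) ->
    typed s (G ++ [(x, A)]) (open1 (FVar x) u) B ->
    ok (G ++ D) ->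
    typed s (G ++ D) (Let (polarity A) t u (polarity B)) B
| ty_pair G D v w A B :
    typed s G v A -> typed s D w B ->
    ok (G ++ D) ->
    typed s (G ++ D) (Pair v w) (TTensor A B)
| ty_dpair G D G' v t x y A B C :
    typed s D v (TTensor A B) ->
    x <> y -> ~ In x (fv t) -> ~ In y (fv t) ->
    typed s (G ++ [(x, A); (y, B)] ++ G') (open2 (FVar x) (FVar y) t) C ->
    ok (G ++ D ++ G') ->
    typed s (G ++ D ++ G') (DPair (polarity C) v t) C
| ty_unit : typed s [] Unit TOne
| ty_dunit G D G' v t A :
    typed s D v TOne ->
    typed s (G ++ G') t A ->
    ok (G ++ D ++ G') ->
    typed s (G ++ D ++ G') (DUnit (polarity A) v t) A
| ty_inj1 G v A B : typed s G v A -> typed s G (Inj I1 v) (TPlus A B)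
| ty_inj2 G v A B : typed s G v B -> typed s G (Inj I2 v) (TPlus A B)
| ty_dcase G D G' v t u x y A B C :
    typed s D v (TPlus A B) ->
    ~ In x (fv t) ->
    typed s (G ++ [(x, A)] ++ G') (open1 (FVar x) t) C ->
    ~ In y (fv u) ->
    typed s (G ++ [(y, B)] ++ G') (open1 (FVar y) u) C ->
    ok (G ++ D ++ G') ->
    typed s (G ++ D ++ G') (DCase (polarity C) v t u) C
| ty_lam G t x A B :
    ~ In x (fv t) ->
    typed s ((x, A) :: G) (open1 (FVar x) t) B ->
    typed s G (Lam t) (TLolli A B)
| ty_app G D v w A B :
    typed s G w A -> typed s D v (TLolli A B) ->
    ok (G ++ D) ->
    typed s (G ++ D) (App (polarity B) v w) B
| ty_withp G t u A B :
    typed s G t A -> typed s G u B ->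
    typed s G (Withp t u) (TWith A B)
| ty_proj G v i A1 A2 :
    typed s G v (TWith A1 A2) ->
    typed s G (Proj (polarity (pick i A1 A2)) i v) (pick i A1 A2).

Inductive frame : Type :=
| FArg : term -> pol -> frame
| FProj : idx -> pol -> frame
| FLet : term -> pol -> frame.         (* (x^+.u)^eps, x bound at index 0 in u *)

Definition stack := list frame.        (* [] is the empty stack (star) *)

Record cmd : Type := Cmd { c_term : term; c_stack : stack; c_free : list nat; c_pol : pol }.

Inductive step : cmd -> cmd -> Prop :=
| st_let_neg v t e s l :
    step (Cmd (Let PNeg v t e) s l e) (Cmd (open1 v t) s l e)
| st_let_pos t u e s l :
    step (Cmd (Let PPos t u e) s l e) (Cmd t (FLet u e :: s) l PPos)
| st_pop v t e s l :
    is_val v ->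
    step (Cmd v (FLet t e :: s) l PPos) (Cmd (open1 v t) s l e)
| st_app v w e s l :
    step (Cmd (App e v w) s l e) (Cmd v (FArg w e :: s) l PNeg)
| st_lam t v e s l :
    step (Cmd (Lam t) (FArg v e :: s) l PNeg) (Cmd (open1 v t) s l e)
| st_proj i v e s l :
    step (Cmd (Proj e i v) s l e) (Cmd v (FProj i e :: s) l PNeg)
| st_withp i t1 t2 e s l :
    step (Cmd (Withp t1 t2) (FProj i e :: s) l PNeg) (Cmd (pick i t1 t2) s l e)
| st_dpair v w t e s l :
    step (Cmd (DPair e (Pair v w) t) s l e) (Cmd (open2 v w t) s l e)
| st_dunit t e s l :
    step (Cmd (DUnit e Unit t) s l e) (Cmd t s l e)
| st_dcase i v t1 t2 e s l :
    step (Cmd (DCase e (Inj i v) t1 t2) s l e) (Cmd (open1 v (pick i t1 t2)) s l e)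
| st_new_some e s n l :
    step (Cmd New (FArg Unit e :: s) (n :: l) PNeg) (Cmd (Inj I1 (Res n)) s l PPos)
| st_new_none e s :
    step (Cmd New (FArg Unit e :: s) [] PNeg) (Cmd (Inj I2 Unit) s [] PPos)
| st_delete n e s l :
    step (Cmd Delete (FArg (Res n) e :: s) l PNeg) (Cmd Unit s (n :: l) PPos).

Inductive star : cmd -> cmd -> Prop :=
| star_refl c : star c c
| star_step c1 c2 c3 : step c1 c2 -> star c2 c3 -> star c1 c3.

(* Main.v *)
Require Import Defs.
From Stdlib Require Import List Arith Lia Permutation.
Import ListNotations.


Inductive nm : Type := NV (x : nat) | NR (n : nat).
Definition rctx := list (nm * ty).

Fixpoint vnames (G : rctx) : list nat :=
  match G with
  | [] => []
  | (NV x, _) :: G' => x :: vnames G'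
  | (NR _, _) :: G' => vnames G'
  end.
Fixpoint rnames (G : rctx) : list nat :=
  match G with
  | [] => []
  | (NV _, _) :: G' => rnames G'
  | (NR n, _) :: G' => n :: rnames G'
  end.
Definition okr (G : rctx) := NoDup (vnames G).

Lemma vnames_app : forall G1 G2, vnames (G1 ++ G2) = vnames G1 ++ vnames G2.
Proof. induction G1 as [|[[x|n] A] G1 IH]; intros; simpl; try rewrite IH; auto. Qed.
Lemma rnames_app : forall G1 G2, rnames (G1 ++ G2) = rnames G1 ++ rnames G2.
Proof. induction G1 as [|[[x|n] A] G1 IH]; intros; simpl; try rewrite IH; auto. Qed.

Fixpoint subst (z : nat) (s : term) (t : term) : term :=
  match t with
  | BVar i => BVar i
  | FVar y => if Nat.eqb y z then s else FVar y
  | Let p t1 t2 q => Let p (subst z s t1) (subst z s t2) q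
  | DPair q v t1 => DPair q (subst z s v) (subst z s t1)
  | DUnit q v t1 => DUnit q (subst z s v) (subst z s t1)
  | DCase q v t1 t2 => DCase q (subst z s v) (subst z s t1) (subst z s t2)
  | App q v w => App q (subst z s v) (subst z s w)
  | Proj q i v => Proj q i (subst z s v)
  | New => New
  | Delete => Delete
  | Pair v w => Pair (subst z s v) (subst z s w)
  | Unit => Unit
  | Inj i v => Inj i (subst z s v)
  | Lam t1 => Lam (subst z s t1)
  | Withp t1 t2 => Withp (subst z s t1) (subst z s t2)
  | Res n => Res n
  end.

Definition lcl (t : term) := forall k u, open_rec k u t = t.

Lemma subst_fresh : forall z s t, ~ In z (fv t) -> subst z s t = t.
Proof.
  induction t; simpl; intros H; repeat rewrite in_app_iff in H; f_equal;
  try (first [apply IHt1 | apply IHt2 | apply IHt3 | apply IHt]; tauto);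
  try reflexivity.
  destruct (Nat.eqb_spec n z); subst; tauto.
Qed.

Lemma fv_subst : forall z s t y, In y (fv (subst z s t)) -> In y (fv t) \/ In y (fv s).
Proof.
  induction t; simpl; intros y H; repeat rewrite in_app_iff in *;
  try (destruct (Nat.eqb_spec n z); simpl in *; tauto);
  firstorder.
Qed.

Lemma fv_open_sup : forall t k u y, In y (fv t) -> In y (fv (open_rec k u t)).
Proof.
  induction t; simpl; intros k u y H; repeat rewrite in_app_iff in *; firstorder.
Qed.

Lemma subst_open_var : forall z s y t k, z <> y -> lcl s ->
  subst z s (open_rec k (FVar y) t) = open_rec k (FVar y) (subst z s t).
Proof.
  intros z s y t; induction t; intros k Hzy Hs; simpl; try (f_equal; auto; fail).
  - destruct (Nat.eqb_spec n k); simpl; auto.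
    destruct (Nat.eqb_spec y z); congruence.
  - destruct (Nat.eqb_spec n z); simpl; auto.
Qed.

Lemma subst_intro : forall z u t k, ~ In z (fv t) ->
  subst z u (open_rec k (FVar z) t) = open_rec k u t.
Proof.
  induction t; intros k H; simpl in *; repeat rewrite in_app_iff in H;
  try (f_equal; first [apply IHt1 | apply IHt2 | apply IHt3 | apply IHt]; tauto);
  try (f_equal; f_equal; first [apply IHt1 | apply IHt2 | apply IHt3 | apply IHt]; tauto);
  try reflexivity.
  - destruct (Nat.eqb_spec n k); simpl; auto. rewrite Nat.eqb_refl; auto.
  - destruct (Nat.eqb_spec n z); subst; tauto.
Qed.

Lemma open_lc_core : forall t a b u v, a <> b ->
  open_rec a u (open_rec b v t) = open_rec b v t -> open_rec a u t = t.
Proof.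
  induction t; intros a b u v Hab H; simpl in *; try (injection H; intros; f_equal; eauto; fail); try reflexivity.
  destruct (Nat.eqb_spec n a); auto. subst.
  destruct (Nat.eqb_spec a b); [congruence|].
  simpl in H. rewrite Nat.eqb_refl in H. auto.
Qed.

Inductive rtyped : rctx -> term -> ty -> Prop :=
| r_var x A : rtyped [(NV x, A)] (FVar x) A
| r_res n : rtyped [(NR n, TR)] (Res n) TR
| r_new : rtyped [] New (TLolli TOne (TPlus TR TOne))
| r_delete : rtyped [] Delete (TLolli TR TOne)
| r_let G D t u x A B :
    rtyped D t A -> ~ In x (fv u) ->
    rtyped (G ++ [(NV x, A)]) (open1 (FVar x) u) B ->
    okr (G ++ D) ->
    rtyped (G ++ D) (Let (polarity A) t u (polarity B)) B
| r_pair G D v w A B :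
    rtyped G v A -> rtyped D w B -> okr (G ++ D) ->
    rtyped (G ++ D) (Pair v w) (TTensor A B)
| r_dpair G D G' v t x y A B C :
    rtyped D v (TTensor A B) ->
    x <> y -> ~ In x (fv t) -> ~ In y (fv t) ->
    rtyped (G ++ [(NV x, A); (NV y, B)] ++ G') (open2 (FVar x) (FVar y) t) C ->
    okr (G ++ D ++ G') ->
    rtyped (G ++ D ++ G') (DPair (polarity C) v t) C
| r_unit : rtyped [] Unit TOne
| r_dunit G D G' v t A :
    rtyped D v TOne -> rtyped (G ++ G') t A -> okr (G ++ D ++ G') ->
    rtyped (G ++ D ++ G') (DUnit (polarity A) v t) A
| r_inj1 G v A B : rtyped G v A -> rtyped G (Inj I1 v) (TPlus A B)
| r_inj2 G v A B : rtyped G v B -> rtyped G (Inj I2 v) (TPlus A B)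
| r_dcase G D G' v t u x y A B C :
    rtyped D v (TPlus A B) ->
    ~ In x (fv t) ->
    rtyped (G ++ [(NV x, A)] ++ G') (open1 (FVar x) t) C ->
    ~ In y (fv u) ->
    rtyped (G ++ [(NV y, B)] ++ G') (open1 (FVar y) u) C ->
    okr (G ++ D ++ G') ->
    rtyped (G ++ D ++ G') (DCase (polarity C) v t u) C
| r_lam G t x A B :
    ~ In x (fv t) ->
    rtyped ((NV x, A) :: G) (open1 (FVar x) t) B ->
    rtyped G (Lam t) (TLolli A B)
| r_app G D v w A B :
    rtyped G w A -> rtyped D v (TLolli A B) -> okr (G ++ D) ->
    rtyped (G ++ D) (App (polarity B) v w) B
| r_withp G t u A B :
    rtyped G t A -> rtyped G u B -> rtyped G (Withp t u) (TWith A B)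
| r_proj G v i A1 A2 :
    rtyped G v (TWith A1 A2) ->
    rtyped G (Proj (polarity (pick i A1 A2)) i v) (pick i A1 A2).

Lemma rt_eq : forall G G' t A, rtyped G t A -> G = G' -> rtyped G' t A.
Proof. intros; subst; auto. Qed.

Definition emb (G : ctx) : rctx := map (fun e => (NV (fst e), snd e)) G.

Lemma vnames_emb : forall G, vnames (emb G) = map fst G.
Proof. induction G as [|[x A] G IH]; simpl; auto. rewrite IH; auto. Qed.

Lemma emb_app : forall G1 G2, emb (G1 ++ G2) = emb G1 ++ emb G2.
Proof. intros; unfold emb; apply map_app. Qed.

Lemma typed_rtyped : forall G t A, typed false G t A -> rtyped (emb G) t A.
Proof.
  intros G t A H. remember false as s eqn:Hs.
  induction H; subst; unfold ok in *;
  repeat rewrite emb_app in *; simpl in *;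
  try discriminate.
  all: try (econstructor; eauto; unfold okr; repeat rewrite vnames_app in *;
            repeat rewrite vnames_emb in *; repeat rewrite <- map_app; auto; fail).
Qed.

Lemma okr_cons : forall a G, okr (a :: G) -> okr G.
Proof. intros [[x|n] A] G H; unfold okr in *; simpl in *; auto. inversion H; auto. Qed.

Lemma rtyped_ok : forall G t A, rtyped G t A -> okr G.
Proof.
  induction 1; auto; try (unfold okr; simpl; repeat constructor; auto; fail).
  eapply okr_cons; eauto.
Qed.

Ltac inapp := repeat (rewrite in_app_iff in * ); simpl in *.

Lemma rtyped_fv : forall G t A, rtyped G t A -> forall z, In z (fv t) -> In z (vnames G).
Proof.
  induction 1; intros z Hz; simpl in Hz; rewrite ?vnames_app; simpl; inapp; auto.
  - destruct Hz as [Hz|Hz]; auto.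
    pose proof (IHrtyped2 z (fv_open_sup _ _ _ _ Hz)) as Hi.
    rewrite vnames_app in Hi; inapp. destruct Hi as [Hi|[Hi|Hi]]; subst; tauto.
  - firstorder.
  - destruct Hz as [Hz|Hz]; auto.
    pose proof (IHrtyped2 z (fv_open_sup _ _ _ _ (fv_open_sup _ _ _ _ Hz))) as Hi.
    rewrite !vnames_app in Hi; inapp. destruct Hi as [Hi|[Hi|[Hi|Hi]]]; subst; tauto.
  - destruct Hz as [Hz|Hz]; auto.
    pose proof (IHrtyped2 z Hz) as Hi.
    rewrite !vnames_app in Hi; inapp. tauto.
  - destruct Hz as [Hz|[Hz|Hz]]; auto.
    + pose proof (IHrtyped2 z (fv_open_sup _ _ _ _ Hz)) as Hi.
      rewrite !vnames_app in Hi; inapp. destruct Hi as [Hi|[Hi|Hi]]; subst; tauto.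
    + pose proof (IHrtyped3 z (fv_open_sup _ _ _ _ Hz)) as Hi.
      rewrite !vnames_app in Hi; inapp. destruct Hi as [Hi|[Hi|Hi]]; subst; tauto.
  - pose proof (IHrtyped z (fv_open_sup _ _ _ _ Hz)) as Hi. simpl in Hi.
    destruct Hi; subst; tauto.
  - firstorder.
  - firstorder.
Qed.

Lemma rtyped_lc : forall G t A, rtyped G t A -> lcl t.
Proof.
  unfold lcl; induction 1; intros k w0; simpl; f_equal; auto.
  - eapply open_lc_core with (b := 0); [lia|]. apply IHrtyped2.
  - eapply open_lc_core with (b := 1); [lia|].
    eapply open_lc_core with (b := 0); [lia|]. apply IHrtyped2.
  - eapply open_lc_core with (b := 0); [lia|]. apply IHrtyped2.
  - eapply open_lc_core with (b := 0); [lia|]. apply IHrtyped3.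
  - eapply open_lc_core with (b := 0); [lia|]. apply IHrtyped.
Qed.

Ltac fin := repeat match goal with H : _ \/ _ |- _ => destruct H end; subst; tauto.

Lemma split_mid : forall {X : Type} (G1 G2 La Lb : list X) a,
  G1 ++ G2 = La ++ a :: Lb ->
  (exists M, G1 = La ++ a :: M /\ Lb = M ++ G2) \/
  (exists M, G2 = M ++ a :: Lb /\ La = G1 ++ M).
Proof.
  induction G1 as [|b G1 IH]; intros G2 La Lb a H; simpl in *.
  - right. exists La. auto.
  - destruct La as [|c La]; simpl in *; injection H; intros; subst.
    + left. exists G1. auto.
    + destruct (IH _ _ _ _ H0) as [[M [E1 E2]]|[M [E1 E2]]]; subst.
      * left. exists M. auto.
      * right. exists M. auto.
Qed.

Lemma split3 : forall {X : Type} (G D G' La Lb : list X) a,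
  G ++ D ++ G' = La ++ a :: Lb ->
  (exists M, G = La ++ a :: M /\ Lb = M ++ D ++ G') \/
  (exists M1 M2, D = M1 ++ a :: M2 /\ La = G ++ M1 /\ Lb = M2 ++ G') \/
  (exists M, G' = M ++ a :: Lb /\ La = G ++ D ++ M).
Proof.
  intros X G D G' La Lb a H.
  destruct (split_mid _ _ _ _ _ H) as [[M [E1 E2]]|[M [E1 E2]]]; [left; eauto|].
  right. destruct (split_mid _ _ _ _ _ E1) as [[M2 [F1 F2]]|[M2 [F1 F2]]]; subst.
  - left. exists M, M2. auto.
  - right. exists M2. rewrite app_assoc. auto.
Qed.

Lemma okr_mid : forall L1 x A L2, okr (L1 ++ (NV x, A) :: L2) ->
  ~ In x (vnames L1) /\ ~ In x (vnames L2).
Proof.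
  unfold okr; intros L1 x A L2 H. rewrite vnames_app in H. simpl in H.
  apply NoDup_remove_2 in H. rewrite in_app_iff in H. tauto.
Qed.

Lemma okr_replace : forall L1 x A L2 D, okr (L1 ++ (NV x, A) :: L2) -> vnames D = [] ->
  okr (L1 ++ D ++ L2).
Proof.
  unfold okr; intros L1 x A L2 D H HD. rewrite !vnames_app in *. rewrite HD. simpl in *.
  eapply NoDup_remove_1; eauto.
Qed.

Lemma okr_two : forall L L1 x A L2 y B L3, okr L ->
  L = L1 ++ (NV x, A) :: L2 ++ (NV y, B) :: L3 -> x <> y.
Proof.
  intros; subst. apply okr_mid in H. destruct H as [_ H].
  rewrite vnames_app in H. simpl in H. rewrite in_app_iff in H. simpl in H.
  intro; subst; tauto.
Qed.

Lemma notin_sub : forall G t A x, rtyped G t A -> ~ In x (vnames G) -> ~ In x (fv t).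
Proof. intros G t A x H Hn Hi. apply Hn. eapply rtyped_fv; eauto. Qed.

Lemma notin_body1 : forall G G' y A u B x,
  rtyped (G ++ [(NV y, A)] ++ G') (open1 (FVar y) u) B -> ~ In y (fv u) ->
  ~ In x (vnames (G ++ G')) -> ~ In x (fv u).
Proof.
  intros G G' y A u B x H Hy Hx Hi.
  pose proof (rtyped_fv _ _ _ H x (fv_open_sup _ _ _ _ Hi)) as Hv.
  rewrite !vnames_app in *; inapp. fin.
Qed.

Lemma notin_body2 : forall G G' y1 A y2 B u C x,
  rtyped (G ++ [(NV y1, A); (NV y2, B)] ++ G') (open2 (FVar y1) (FVar y2) u) C ->
  ~ In y1 (fv u) -> ~ In y2 (fv u) ->
  ~ In x (vnames (G ++ G')) -> ~ In x (fv u).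
Proof.
  intros G G' y1 A y2 B u C x H Hy1 Hy2 Hx Hi.
  pose proof (rtyped_fv _ _ _ H x (fv_open_sup _ _ _ _ (fv_open_sup _ _ _ _ Hi))) as Hv.
  rewrite !vnames_app in *; inapp. fin.
Qed.

Lemma fv_subst_closed : forall z s t y, fv s = [] -> In y (fv (subst z s t)) -> In y (fv t).
Proof. intros z s t y Hs H. destruct (fv_subst _ _ _ _ H) as [H'|H']; auto. rewrite Hs in H'. destruct H'. Qed.


Ltac ctx_eq := repeat rewrite <- app_assoc; simpl; repeat rewrite <- app_assoc; reflexivity.

Lemma okr_eq : forall L L', okr L -> L = L' -> okr L'.
Proof. intros; subst; auto. Qed.

Lemma nil_mid : forall {X : Type} (La Lb : list X) b, [] = La ++ b :: Lb -> False.
Proof. intros X La Lb b H. destruct La; discriminate. Qed.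

Lemma single_mid : forall {X : Type} (La Lb : list X) a b, [a] = La ++ b :: Lb ->
  La = [] /\ Lb = [] /\ a = b.
Proof.
  intros X La Lb a b H. destruct La as [|c La]; simpl in H; injection H; intros; subst; auto.
  exfalso; eapply nil_mid; eauto.
Qed.

Ltac pre Hok Heq HDv :=
  let H2 := fresh "Hokm" in pose proof Hok as H2; rewrite Heq in H2;
  let H3 := fresh "Hokr" in pose proof (okr_replace _ _ _ _ _ H2 HDv) as H3;
  let Hn1 := fresh "Hn1" in let Hn2 := fresh "Hn2" in destruct (okr_mid _ _ _ _ H2) as [Hn1 Hn2].

Ltac neq L1 L2 L3 H := eapply (okr_two _ L1 _ _ L2 _ _ L3); [eapply rtyped_ok; exact H | ctx_eq].

Ltac nsimp := repeat rewrite vnames_app in *; simpl in *; repeat rewrite in_app_iff in *; simpl in *.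

Lemma subst_typed : forall G0 t B, rtyped G0 t B ->
  forall Ga xs As Gb Dv vv, G0 = Ga ++ (NV xs, As) :: Gb -> rtyped Dv vv As ->
  vnames Dv = [] -> fv vv = [] -> lcl vv ->
  rtyped (Ga ++ Dv ++ Gb) (subst xs vv t) B.
Proof.
  induction 1 as [x A|n| | 
    |G D t u x A B Ht IHt Hx Hu IHu Hok
    |G D v w A B Hv0 IHv Hw IHw Hok
    |G D G' v t x y A B C Hv0 IHv Hxy Hx Hy Hb IHb Hok
    |
    |G D G' v t A Hv0 IHv Hb IHb Hok
    |G v A B Hv0 IHv
    |G v A B Hv0 IHv
    |G D G' v t u x y A B C Hv0 IHv Hx Ht IHt Hy Hu IHu Hok
    |G t x A B Hx Hb IHb
    |G D v w A B Hw IHw Hv0 IHv Hok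
    |G t u A B Ht IHt Hu IHu
    |G v i A1 A2 Hv0 IHv];
  intros Ga xs As Gb Dv vv Heq HV HDv Hfv Hlc; simpl.
  -
    destruct (single_mid _ _ _ _ Heq) as [E1 [E2 E3]]; injection E3; intros; subst.
    rewrite Nat.eqb_refl, app_nil_r; auto.
  - destruct (single_mid _ _ _ _ Heq) as [E1 [E2 E3]]; discriminate.
  - exfalso; eapply nil_mid; eauto.
  - exfalso; eapply nil_mid; eauto.
  -
    pre Hok Heq HDv.
    destruct (split_mid _ _ _ _ _ Heq) as [[M [E1 E2]]|[M [E1 E2]]]; subst.
    + nsimp.
      rewrite (subst_fresh xs vv t) by (eapply notin_sub; [exact Ht|]; tauto).
      assert (Hne : xs <> x) by (neq Ga M (@nil (nm*ty)) Hu).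
      specialize (IHu Ga xs As (M ++ [(NV x, A)]) Dv vv ltac:(ctx_eq) HV HDv Hfv Hlc).
      unfold open1 in *. rewrite subst_open_var in IHu by auto.
      eapply rt_eq with (G := (Ga ++ Dv ++ M) ++ D); [|ctx_eq].
      apply r_let with (x := x); eauto.
      * intro Hi; apply fv_subst_closed in Hi; auto.
      * eapply rt_eq; [exact IHu|ctx_eq].
      * eapply okr_eq; [exact Hokr|ctx_eq].
    + nsimp.
      rewrite (subst_fresh xs vv u) by
        (eapply (notin_body1 G []); [rewrite app_nil_r; exact Hu|auto|rewrite app_nil_r; nsimp; tauto]).
      eapply rt_eq with (G := G ++ (M ++ Dv ++ Gb)); [|ctx_eq].
      apply r_let with (x := x); eauto.
      eapply okr_eq; [exact Hokr|ctx_eq].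
  -
    pre Hok Heq HDv.
    destruct (split_mid _ _ _ _ _ Heq) as [[M [E1 E2]]|[M [E1 E2]]]; subst.
    + nsimp.
      rewrite (subst_fresh xs vv w) by (eapply notin_sub; [exact Hw|]; tauto).
      eapply rt_eq with (G := (Ga ++ Dv ++ M) ++ D); [|ctx_eq].
      apply r_pair; eauto.
      eapply okr_eq; [exact Hokr|ctx_eq].
    + nsimp.
      rewrite (subst_fresh xs vv v) by (eapply notin_sub; [exact Hv0|]; tauto).
      eapply rt_eq with (G := G ++ (M ++ Dv ++ Gb)); [|ctx_eq].
      apply r_pair; eauto.
      eapply okr_eq; [exact Hokr|ctx_eq].
  -
    pre Hok Heq HDv.
    destruct (split3 _ _ _ _ _ _ Heq) as [[M [E1 E2]]|[[M1 [M2 [E1 [E2 E3]]]]|[M [E1 E2]]]]; subst.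
    + nsimp.
      rewrite (subst_fresh xs vv v) by (eapply notin_sub; [exact Hv0|]; tauto).
      assert (Hne1 : xs <> x) by (neq Ga M ((NV y, B) :: G') Hb).
      assert (Hne2 : xs <> y) by (neq Ga (M ++ [(NV x, A)]) G' Hb).
      specialize (IHb Ga xs As (M ++ [(NV x, A); (NV y, B)] ++ G') Dv vv ltac:(ctx_eq) HV HDv Hfv Hlc).
      unfold open2 in *. rewrite !subst_open_var in IHb by auto.
      eapply rt_eq with (G := (Ga ++ Dv ++ M) ++ D ++ G'); [|ctx_eq].
      apply r_dpair with (x := x) (y := y) (A := A) (B := B); eauto.
      * intro Hi; apply fv_subst_closed in Hi; auto.
      * intro Hi; apply fv_subst_closed in Hi; auto.
      * eapply rt_eq; [exact IHb|ctx_eq].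
      * eapply okr_eq; [exact Hokr|ctx_eq].
    + nsimp.
      rewrite (subst_fresh xs vv t) by
        (eapply notin_body2; [exact Hb|auto|auto|nsimp; tauto]).
      eapply rt_eq with (G := G ++ (M1 ++ Dv ++ M2) ++ G'); [|ctx_eq].
      apply r_dpair with (x := x) (y := y) (A := A) (B := B); eauto.
      eapply okr_eq; [exact Hokr|ctx_eq].
    + nsimp.
      rewrite (subst_fresh xs vv v) by (eapply notin_sub; [exact Hv0|]; tauto).
      assert (Hne1 : x <> xs) by (neq G ((NV y, B) :: M) Gb Hb).
      assert (Hne2 : y <> xs) by (neq (G ++ [(NV x, A)]) M Gb Hb).
      specialize (IHb (G ++ [(NV x, A); (NV y, B)] ++ M) xs As Gb Dv vv ltac:(ctx_eq) HV HDv Hfv Hlc).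
      unfold open2 in *. rewrite !subst_open_var in IHb by auto.
      eapply rt_eq with (G := G ++ D ++ (M ++ Dv ++ Gb)); [|ctx_eq].
      apply r_dpair with (x := x) (y := y) (A := A) (B := B); eauto.
      * intro Hi; apply fv_subst_closed in Hi; auto.
      * intro Hi; apply fv_subst_closed in Hi; auto.
      * eapply rt_eq; [exact IHb|ctx_eq].
      * eapply okr_eq; [exact Hokr|ctx_eq].
  - exfalso; eapply nil_mid; eauto.
  -
    pre Hok Heq HDv.
    destruct (split3 _ _ _ _ _ _ Heq) as [[M [E1 E2]]|[[M1 [M2 [E1 [E2 E3]]]]|[M [E1 E2]]]]; subst.
    + nsimp.
      rewrite (subst_fresh xs vv v) by (eapply notin_sub; [exact Hv0|]; tauto).
      specialize (IHb Ga xs As (M ++ G') Dv vv ltac:(ctx_eq) HV HDv Hfv Hlc).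
      eapply rt_eq with (G := (Ga ++ Dv ++ M) ++ D ++ G'); [|ctx_eq].
      apply r_dunit; eauto.
      * eapply rt_eq; [exact IHb|ctx_eq].
      * eapply okr_eq; [exact Hokr|ctx_eq].
    + nsimp.
      rewrite (subst_fresh xs vv t) by (eapply notin_sub; [exact Hb|]; nsimp; tauto).
      eapply rt_eq with (G := G ++ (M1 ++ Dv ++ M2) ++ G'); [|ctx_eq].
      apply r_dunit; eauto.
      eapply okr_eq; [exact Hokr|ctx_eq].
    + nsimp.
      rewrite (subst_fresh xs vv v) by (eapply notin_sub; [exact Hv0|]; tauto).
      specialize (IHb (G ++ M) xs As Gb Dv vv ltac:(ctx_eq) HV HDv Hfv Hlc).
      eapply rt_eq with (G := G ++ D ++ (M ++ Dv ++ Gb)); [|ctx_eq].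
      apply r_dunit; eauto.
      * eapply rt_eq; [exact IHb|ctx_eq].
      * eapply okr_eq; [exact Hokr|ctx_eq].
  - apply r_inj1; eauto.
  - apply r_inj2; eauto.
  -
    pre Hok Heq HDv.
    destruct (split3 _ _ _ _ _ _ Heq) as [[M [E1 E2]]|[[M1 [M2 [E1 [E2 E3]]]]|[M [E1 E2]]]]; subst.
    + nsimp.
      rewrite (subst_fresh xs vv v) by (eapply notin_sub; [exact Hv0|]; tauto).
      assert (Hne1 : xs <> x) by (neq Ga M G' Ht).
      assert (Hne2 : xs <> y) by (neq Ga M G' Hu).
      specialize (IHt Ga xs As (M ++ [(NV x, A)] ++ G') Dv vv ltac:(ctx_eq) HV HDv Hfv Hlc).
      specialize (IHu Ga xs As (M ++ [(NV y, B)] ++ G') Dv vv ltac:(ctx_eq) HV HDv Hfv Hlc).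
      unfold open1 in *. rewrite !subst_open_var in IHt, IHu by auto.
      eapply rt_eq with (G := (Ga ++ Dv ++ M) ++ D ++ G'); [|ctx_eq].
      apply r_dcase with (x := x) (y := y) (A := A) (B := B); eauto.
      * intro Hi; apply fv_subst_closed in Hi; auto.
      * eapply rt_eq; [exact IHt|ctx_eq].
      * intro Hi; apply fv_subst_closed in Hi; auto.
      * eapply rt_eq; [exact IHu|ctx_eq].
      * eapply okr_eq; [exact Hokr|ctx_eq].
    + nsimp.
      rewrite (subst_fresh xs vv t) by (eapply notin_body1; [exact Ht|auto|nsimp; tauto]).
      rewrite (subst_fresh xs vv u) by (eapply notin_body1; [exact Hu|auto|nsimp; tauto]).
      eapply rt_eq with (G := G ++ (M1 ++ Dv ++ M2) ++ G'); [|ctx_eq].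
      apply r_dcase with (x := x) (y := y) (A := A) (B := B); eauto.
      eapply okr_eq; [exact Hokr|ctx_eq].
    + nsimp.
      rewrite (subst_fresh xs vv v) by (eapply notin_sub; [exact Hv0|]; tauto).
      assert (Hne1 : x <> xs) by (neq G M Gb Ht).
      assert (Hne2 : y <> xs) by (neq G M Gb Hu).
      specialize (IHt (G ++ [(NV x, A)] ++ M) xs As Gb Dv vv ltac:(ctx_eq) HV HDv Hfv Hlc).
      specialize (IHu (G ++ [(NV y, B)] ++ M) xs As Gb Dv vv ltac:(ctx_eq) HV HDv Hfv Hlc).
      unfold open1 in *. rewrite !subst_open_var in IHt, IHu by auto.
      eapply rt_eq with (G := G ++ D ++ (M ++ Dv ++ Gb)); [|ctx_eq].
      apply r_dcase with (x := x) (y := y) (A := A) (B := B); eauto.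
      * intro Hi; apply fv_subst_closed in Hi; auto.
      * eapply rt_eq; [exact IHt|ctx_eq].
      * intro Hi; apply fv_subst_closed in Hi; auto.
      * eapply rt_eq; [exact IHu|ctx_eq].
      * eapply okr_eq; [exact Hokr|ctx_eq].
  -
    subst.
    assert (Hne : x <> xs) by (neq (@nil (nm*ty)) Ga Gb Hb).
    specialize (IHb ((NV x, A) :: Ga) xs As Gb Dv vv eq_refl HV HDv Hfv Hlc).
    unfold open1 in *. rewrite subst_open_var in IHb by auto.
    apply r_lam with (x := x); eauto.
    intro Hi; apply fv_subst_closed in Hi; auto.
  -
    pre Hok Heq HDv.
    destruct (split_mid _ _ _ _ _ Heq) as [[M [E1 E2]]|[M [E1 E2]]]; subst.
    + nsimp.
      rewrite (subst_fresh xs vv v) by (eapply notin_sub; [exact Hv0|]; tauto).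
      eapply rt_eq with (G := (Ga ++ Dv ++ M) ++ D); [|ctx_eq].
      apply r_app with (A := A); eauto.
      eapply okr_eq; [exact Hokr|ctx_eq].
    + nsimp.
      rewrite (subst_fresh xs vv w) by (eapply notin_sub; [exact Hw|]; tauto).
      eapply rt_eq with (G := G ++ (M ++ Dv ++ Gb)); [|ctx_eq].
      apply r_app with (A := A); eauto.
      eapply okr_eq; [exact Hokr|ctx_eq].
  - apply r_withp; eauto.
  - apply r_proj; eauto.
Qed.

Lemma fv_open_sub : forall t k u y, In y (fv (open_rec k u t)) -> In y (fv t) \/ In y (fv u).
Proof.
  induction t; simpl; intros k u y H; repeat rewrite in_app_iff in *;
  try (destruct (Nat.eqb_spec n k); simpl in *; tauto); firstorder.
Qed.

Lemma closed_of : forall D v A, rtyped D v A -> vnames D = [] -> fv v = [].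
Proof.
  intros D v A H HD. destruct (fv v) as [|z l] eqn:E; auto.
  exfalso. pose proof (rtyped_fv _ _ _ H z) as Hz. rewrite E, HD in Hz. simpl in Hz. tauto.
Qed.

Lemma subst_mid1 : forall G G' x A u B D v,
  rtyped (G ++ [(NV x, A)] ++ G') (open1 (FVar x) u) B -> ~ In x (fv u) ->
  rtyped D v A -> vnames D = [] -> rtyped (G ++ D ++ G') (open1 v u) B.
Proof.
  intros G G' x A u B D v Hu Hx Hv HD.
  pose proof (subst_typed _ _ _ Hu G x A G' D v eq_refl Hv HD (closed_of _ _ _ Hv HD)
                (rtyped_lc _ _ _ Hv)) as H.
  unfold open1 in *. rewrite subst_intro in H; auto.
Qed.

Lemma subst2 : forall G G' x A y B t C D1 D2 v w,
  rtyped (G ++ [(NV x, A); (NV y, B)] ++ G') (open2 (FVar x) (FVar y) t) C ->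
  x <> y -> ~ In x (fv t) -> ~ In y (fv t) ->
  rtyped D1 v A -> rtyped D2 w B -> vnames D1 = [] -> vnames D2 = [] ->
  rtyped (G ++ (D1 ++ D2) ++ G') (open2 v w t) C.
Proof.
  intros G G' x A y B t C D1 D2 v w H Hxy Hx Hy Hv Hw H1 H2.
  pose proof (subst_typed _ _ _ H G x A ((NV y, B) :: G') D1 v eq_refl Hv H1 (closed_of _ _ _ Hv H1)
                (rtyped_lc _ _ _ Hv)) as H'.
  unfold open2 in *. rewrite subst_open_var in H' by (auto; apply (rtyped_lc _ _ _ Hv)).
  rewrite subst_intro in H' by auto.
  pose proof (subst_typed _ _ _ H' (G ++ D1) y B G' D2 w ltac:(rewrite <- app_assoc; reflexivity)
                Hw H2 (closed_of _ _ _ Hw H2) (rtyped_lc _ _ _ Hw)) as H''.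
  rewrite subst_intro in H''.
  - eapply rt_eq; [exact H''|]. rewrite <- !app_assoc. reflexivity.
  - intro Hi. apply fv_open_sub in Hi. rewrite (closed_of _ _ _ Hv H1) in Hi. simpl in Hi. tauto.
Qed.

Inductive ftyped : rctx -> frame -> ty -> ty -> Prop :=
| f_arg G w e A B : rtyped G w A -> ftyped G (FArg w e) (TLolli A B) B
| f_proj i e A1 A2 : ftyped [] (FProj i e) (TWith A1 A2) (pick i A1 A2)
| f_let G u e x A B : ~ In x (fv u) -> rtyped (G ++ [(NV x, A)]) (open1 (FVar x) u) B ->
    ftyped G (FLet u e) A B.

Inductive styped : rctx -> stack -> ty -> ty -> Prop :=
| s_nil A : styped [] [] A A
| s_cons S G f s A B C : ftyped G f A B -> styped S s B C -> styped (S ++ G) (f :: s) A C.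

Definition inv (l0 : list nat) (W : ty) (c : cmd) : Prop :=
  exists S D A, styped S (c_stack c) A W /\ rtyped D (c_term c) A /\
    vnames (S ++ D) = [] /\ rnames (S ++ D) ++ c_free c = l0.

Lemma vn_nil : forall L1 L2, vnames (L1 ++ L2) = [] -> vnames L1 = [] /\ vnames L2 = [].
Proof. intros L1 L2 H. rewrite vnames_app in H. apply app_eq_nil in H. auto. Qed.

Ltac vn := repeat match goal with
  | H : vnames (_ ++ _) = [] |- _ => apply vn_nil in H; destruct H
  end.

Ltac invf := match goal with H : ftyped _ _ _ _ |- _ => inversion H; subst; clear H end.
Ltac invU := match goal with
  | H : rtyped _ Unit _ |- _ => inversion H; subst; clear H
  | H : rtyped _ (Res _) _ |- _ => inversion H; subst; clear H end.
Ltac invP := match goal with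
  | H : rtyped _ (Pair _ _) _ |- _ => inversion H; subst; clear H end.

Lemma step_inv : forall l0 W c c', step c c' -> inv l0 W c -> inv l0 W c'.
Proof.
  intros l0 W c c' Hst (S & D & A & Hs & Ht & Hvn & Hrn).
  destruct Hst; simpl in *.
  -
    inversion Ht; subst.
    exists S, (G ++ D0), A. split; [auto|]. split; [|auto].
    pose proof Hvn as Hv'. vn.
    eapply rt_eq; [eapply (subst_mid1 G []); eauto; rewrite app_nil_r; eauto|].
    rewrite app_nil_r; reflexivity.
  -
    inversion Ht; subst.
    exists (S ++ G), D0, A0. rewrite <- app_assoc. repeat split; auto.
    econstructor; eauto. econstructor; eauto.
  -
    inversion Hs; subst. invf.
    exists S0, (G ++ D), B. rewrite <- app_assoc in *. repeat split; auto.
    pose proof Hvn as Hv'. vn.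
    eapply rt_eq; [eapply (subst_mid1 G []); eauto; rewrite app_nil_r; eauto|].
    rewrite app_nil_r; reflexivity.
  -
    inversion Ht; subst.
    exists (S ++ G), D0, (TLolli A0 A). rewrite <- app_assoc. repeat split; auto.
    econstructor; eauto. econstructor; eauto.
  -
    inversion Ht; subst. inversion Hs; subst. invf.
    exists S0, (G ++ D), B0. rewrite <- app_assoc in *. repeat split; auto.
    pose proof Hvn as Hv'. vn.
    apply (subst_mid1 [] D x A0 t B0 G v); auto.
  -
    inversion Ht; subst.
    exists (S ++ []), D, (TWith A1 A2). simpl.
    split; [econstructor; [constructor|exact Hs]|]. rewrite app_nil_r. repeat split; auto.
  -
    inversion Ht; subst. inversion Hs; subst. invf.
    exists S0, D, (pick i A0 B). rewrite app_nil_r in *. repeat split; auto.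
    destruct i; simpl; auto.
  -
    inversion Ht; subst. invP.
    exists S, (G ++ (G0 ++ D) ++ G'), A. repeat split; auto.
    pose proof Hvn as Hv'. vn.
    eapply subst2; eauto.
  -
    inversion Ht; subst. invU.
    exists S, (G ++ G'), A. simpl in *. repeat split; auto.
  -
    inversion Ht; subst.
    exists S, (G ++ D0 ++ G'), A. repeat split; auto.
    pose proof Hvn as Hv'. vn.
    destruct i; match goal with H : rtyped _ (Inj _ _) _ |- _ => inversion H; subst end; simpl.
    + eapply subst_mid1; eauto.
    + eapply subst_mid1; eauto.
  -
    inversion Ht; subst. inversion Hs; subst. invf. invU.
    exists S0, [(NR n, TR)], (TPlus TR TOne). repeat split; auto.
    + constructor. constructor.
    + rewrite !app_nil_r in Hvn. rewrite vnames_app, Hvn. reflexivity.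
    + rewrite !rnames_app. simpl. rewrite !app_nil_r, <- app_assoc. reflexivity.
  -
    inversion Ht; subst. inversion Hs; subst. invf. invU.
    exists S0, [], (TPlus TR TOne). rewrite !app_nil_r in *. repeat split; auto.
    constructor. constructor.
  -
    inversion Ht; subst. inversion Hs; subst. invf. invU.
    exists S0, [], TOne. rewrite !app_nil_r in *. repeat split; auto.
    + constructor.
    + rewrite vnames_app in Hvn. apply app_eq_nil in Hvn. destruct Hvn; auto.
    + rewrite !rnames_app. simpl. rewrite <- app_assoc. reflexivity.
Qed.

Lemma star_inv : forall l0 W c c', star c c' -> inv l0 W c -> inv l0 W c'.
Proof. induction 1; intros; eauto using step_inv. Qed.

Lemma central_pos : forall W, central W -> polarity W = PPos.
Proof. intros W H; inversion H; reflexivity. Qed.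

Lemma central_val : forall v D W, central W -> is_val v -> rtyped D v W -> rnames D = [].
Proof.
  induction v; intros D W Hc Hv Ht; inversion Hv; subst; inversion Ht; subst;
  try (pose proof (central_pos _ Hc); congruence);
  try (inversion Hc; fail); auto.
  - rewrite rnames_app. inversion Hc; subst.
    rewrite (IHv1 G A), (IHv2 D0 B); auto.
  - inversion Hc; subst; eauto.
  - inversion Hc; subst; eauto.
Qed.

Theorem proposition1 :
  forall (W : ty) (t v : term) (l l' : list nat) (e : pol),
    central W ->
    is_exp t ->
    typed false [] t W ->
    is_val v ->
    typed true [] v W ->
    star (Cmd t [] l PPos) (Cmd v [] l' e) ->
    l' = l.
Proof.
  intros W t v l l' e Hc _ Ht Hv _ Hstar.
  assert (Hi : inv l W (Cmd t [] l PPos)).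
  { exists [], [], W. simpl. repeat split; auto. constructor.
    apply (typed_rtyped [] t W Ht). }
  destruct (star_inv _ _ _ _ Hstar Hi) as (S & D & A & Hs & Htv & Hvn & Hrn).
  simpl in *. inversion Hs; subst.
  pose proof (central_val _ _ _ Hc Hv Htv) as E. simpl in *. rewrite E in *. simpl in *. auto.
Qed.
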